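(* Let $T=\{0,\dots,N\}$ and $\mathbb{F}$ a field. Let $C_\bullet$ and $C'_\bullet$ be filtrations (indexed by $T$) of finite-dimensional chain complexes $C=C_N$ and $C'=C'_N$ over $\mathbb{F}$, with filtration compatible ordered bases $\mathfrak{C}=(c_1,\dots,c_n)$ and $\mathfrak{C}'=(c'_1,\dots,c'_n)$ and corresponding filtration boundary matrices $D$ and $D'$. Let $\varphi_\bullet\colon C_\bullet\to C'_\bullet$ be an injective morphism of filtrations of chain complexes such that $\varphi=\varphi_N\colon C\to C'$ is an isomorphism, let $F$ be the matrix of $\varphi$ with respect to $\mathfrak{C}$ and $\mathfrak{C}'$, and set $D^{\varphi}=DF^{-1}=F^{-1}D'$. Suppose $V$ and $V^{\varphi}$ are invertible upper-triangular $n\times n$ matrices such that $R=DV$ and $R^{\varphi}=D^{\varphi}V^{\varphi}$ are reduced. Interpret the columns of $R$, $D$, $V$, $R^\varphi$, $D^\varphi$ as coordinate vectors (hence elements of $C$) with respect to $\mathfrak{C}$, and the columns of $V^{\varphi}$ as coordinate vectors (elements of $C'$) with respect to $\mathfrak{C}'$. Then the persistence module $\operatorname{im}H_*(\varphi_\bullet)$, $t\mapsto\operatorname{im}\big(H_*(\varphi_t)\colon H_*(C_t)\to H_*(C'_t)\big)$, has a barcode given by the multiset union \[ \left\{\operatorname{supp}_{C_\bullet}(r^{\varphi}_j)\setminus\operatorname{supp}_{C'_\bullet}(v^{\varphi}_j)\;\middle|\; r^{\varphi}_j\neq 0,\ \operatorname{supp}_{C_\bullet}(r^{\varphi}_j)\setminus\operatorname{supp}_{C'_\bullet}(v^{\varphi}_j)\neq\emptyset\right\}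 \cup \left\{\operatorname{supp}_{C_\bullet}(v_i)\;\middle|\; r_i=0 \text{ and } i\notin\operatorname{pivs}R^{\varphi}\right\}. \]
   Context: A chain complex here is a finite-dimensional graded $\mathbb{F}$-vector space with a differential $\partial$ of degree $-1$ with $\partial^2=0$. A filtration of a vector space $M$ indexed by $T$ is a chain of subspaces $M_0\subseteq\dots\subseteq M_N=M$; a filtration of chain complexes is such a chain of subcomplexes. The support of $m\in M$ is $\operatorname{supp}_{M_\bullet}(m)=\{t\in T\mid m\in M_t\}$. A basis $\mathfrak{M}$ of $M$ is filtration compatible if $\mathfrak{M}\cap M_t$ is a basis of $M_t$ for all $t$; an ordered basis is a filtration compatible ordered basis if it is filtration compatible and $m\le m'$ implies $\operatorname{supp}(m')\subseteq\operatorname{supp}(m)$. The filtration boundary matrix is the matrix of $\partial$ on $C$ in the given filtration compatible ordered basis. For a matrix $X$, $x_j$ denotes its $j$-th column; for a nonzero column $x_j$, $\operatorname{piv}x_j$ is the largest row index of a nonzero entry; $\operatorname{pivs}X$ is the set of pivots of nonzero columns of $X$; $X$ is reduced if no two nonzero columns have the same pivot. A persistence module indexed by $T$ (a functor from the poset $T$ to $\mathbb{F}$-vector spaces) has barcode $(I_\alpha)$ (a multiset of intervals of $T$) if it is isomorphic to $\bigoplus_\alpha C(I_\alpha)$, where the interval module $C(I)$ is $\mathbb{F}$ at $t\in I$, $0$ otherwise, with identity structure maps within $I$ and zero otherwise. *)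

(* Defs.v *)
From HB Require Import structures.
From mathcomp Require Import all_boot all_order all_algebra.
Set Implicit Arguments. Unset Strict Implicit. Unset Printing Implicit Defensive.
Import Order.TTheory GRing.Theory Num.Theory.
Local Open Scope ring_scope.

(* Index poset T = {0,...,N} is 'I_N.+1.  A chain complex with an ordered
   basis (c_1..c_n) is modelled on coordinate column vectors 'cV[F]_n; the
   differential is x |-> D *m x, D the boundary matrix (columns = images of
   basis vectors).  deg i : int is the degree of the homogeneous basis
   element c_i.  A filtration compatible ordered basis is described by the
   birth times b i = min supp(c_i); then C_t = span{c_i | b i <= t}. *)

Section Defs.
Variable F : fieldType.

Definition inFilt (n N : nat) (b : 'I_n -> 'I_N.+1) (t : 'I_N.+1)
  (x : 'cV[F]_n) : bool := [forall i, (t < b i)%N ==> (x i 0 == 0)].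

Definition supp (n N : nat) (b : 'I_n -> 'I_N.+1) (x : 'cV[F]_n)
  : {set 'I_N.+1} := [set t | inFilt b t x].

Definition homog (n : nat) (deg : 'I_n -> int) (k : int) (x : 'cV[F]_n) : Prop :=
  forall i, x i 0 != 0 -> deg i = k.

Definition filt_chain_complex (n N : nat) (D : 'M[F]_n) (deg : 'I_n -> int)
  (b : 'I_n -> 'I_N.+1) : Prop :=
  [/\ D *m D = 0,
      (forall k x, homog deg k x -> homog deg (k - 1) (D *m x)),
      (forall t x, inFilt b t x -> inFilt b t (D *m x)) &
      (forall i j : 'I_n, (i <= j)%N -> (b i <= b j)%N)].

Definition filt_chain_map (n N : nat) (D D' Fm : 'M[F]_n)
  (deg deg' : 'I_n -> int) (b b' : 'I_n -> 'I_N.+1) : Prop :=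
  [/\ Fm *m D = D' *m Fm,
      (forall k x, homog deg k x -> homog deg' k (Fm *m x)) &
      (forall t x, inFilt b t x -> inFilt b' t (Fm *m x))].

Definition upper_triangular (n : nat) (V : 'M[F]_n) : Prop :=
  forall i j : 'I_n, (j < i)%N -> V i j = 0.

Definition is_piv (n : nat) (X : 'M[F]_n) (j i : 'I_n) : bool :=
  (X i j != 0) && [forall i' : 'I_n, (i < i')%N ==> (X i' j == 0)].

Definition pivs (n : nat) (X : 'M[F]_n) : {set 'I_n} :=
  [set i | [exists j, is_piv X j i]].

Definition reduced (n : nat) (X : 'M[F]_n) : Prop :=
  forall j1 j2 i, is_piv X j1 i -> is_piv X j2 i -> j1 = j2.

Definition is_interval (N : nat) (I : {set 'I_N.+1}) : Prop :=
  forall s u t : 'I_N.+1, (s <= u)%N -> (u <= t)%N -> s \in I -> t \in I -> u \in I.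

(* The persistence module t |-> (A t + B t) / B t, a subquotient of the fixed
   ambient space 'cV_m, with structure maps (s <= t) induced by the identity
   of the ambient space, has barcode bars, i.e. it is isomorphic to
   (+)_a C(bars_a).  Unfolded: an isomorphism from (+)_a C(I_a) is given by
   the images [y a t] (classes mod B t) of the generators of the summands
   C(I_a)_t = F, t \in I_a; these must form a basis of (A t + B t)/B t and
   be compatible with the structure maps. *)
Definition subquot_has_barcode (m N : nat) (A B : 'I_N.+1 -> 'cV[F]_m -> Prop)
  (bars : seq {set 'I_N.+1}) : Prop :=
  (forall a, a \in bars -> is_interval a) /\
  exists y : 'I_(size bars) -> 'I_N.+1 -> 'cV[F]_m,
  [/\
      (forall (a : 'I_(size bars)) t, t \in nth set0 bars a ->
          exists u v, [/\ A t u, B t v & y a t = u + v]),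
      (forall t (c : 'I_(size bars) -> F),
          B t (\sum_(a : 'I_(size bars) | t \in nth set0 bars a) c a *: y a t) ->
          forall a : 'I_(size bars), t \in nth set0 bars a -> c a = 0),
      (forall t u v, A t u -> B t v ->
          exists c : 'I_(size bars) -> F,
            B t (u + v - \sum_(a : 'I_(size bars) | t \in nth set0 bars a) c a *: y a t)) &
      (forall (a : 'I_(size bars)) (s t : 'I_N.+1), (s <= t)%N -> s \in nth set0 bars a ->
          if t \in nth set0 bars a then B t (y a s - y a t) else B t (y a s))].

(* the image persistence module im H_*(phi_.) as subquotient of C':
   im H_*(phi_t) = (phi(Z_t) + B'_t)/B'_t, Z_t cycles of C_t, B'_t
   boundaries of C'_t. *)
Definition im_cycles (n N : nat) (D Fm : 'M[F]_n) (b : 'I_n -> 'I_N.+1)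
  (t : 'I_N.+1) (y : 'cV[F]_n) : Prop :=
  exists z, [/\ inFilt b t z, D *m z = 0 & y = Fm *m z].

Definition boundaries (n N : nat) (D' : 'M[F]_n) (b' : 'I_n -> 'I_N.+1)
  (t : 'I_N.+1) (y : 'cV[F]_n) : Prop :=
  exists w, inFilt b' t w /\ y = D' *m w.

Definition im_homology_has_barcode (n N : nat) (D D' Fm : 'M[F]_n)
  (b b' : 'I_n -> 'I_N.+1) (bars : seq {set 'I_N.+1}) : Prop :=
  subquot_has_barcode (im_cycles D Fm b) (boundaries D' b') bars.

End Defs.

(* Main.v *)
Require Import Defs.
From HB Require Import structures.
From mathcomp Require Import all_boot all_order all_algebra.
From mathcomp Require Import zify.
Set Implicit Arguments. Unset Strict Implicit. Unset Printing Implicit Defensive.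
Import Order.TTheory GRing.Theory Num.Theory.
Local Open Scope ring_scope.

Section Aux.
Variable F : fieldType.
Variable n : nat.
Implicit Types (x : 'cV[F]_n) (X : 'M[F]_n).

Definition pv x : nat := \max_(i : 'I_n | x i ord0 != 0%R) (nat_of_ord i).

Lemma pv_ge x (i : 'I_n) : x i 0 != 0 -> (i <= pv x)%N.
Proof. by move=> h; apply: (@leq_bigmax_cond _ (fun i : 'I_n => x i 0 != 0) (fun i => nat_of_ord i)). Qed.

Lemma nz_ex x : x != 0 -> exists i : 'I_n, x i 0 != 0.
Proof.
move=> nz; apply/existsP; apply: contraR nz; rewrite negb_exists => /forallP h.
by apply/eqP/matrixP => i j; rewrite ord1 mxE; move/negPn/eqP: (h i).
Qed.

Lemma pv_ex x : x != 0 -> exists i : 'I_n, x i 0 != 0 /\ pv x = i.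
Proof.
move=> /nz_ex [i0 h0].
case: (@arg_maxnP _ i0 (fun i => x i 0 != 0) (fun i => nat_of_ord i) h0) => i Pi mx.
exists i; split => //; apply/eqP; rewrite eqn_leq pv_ge // andbT.
by apply/bigmax_leqP => j; apply: mx.
Qed.

Lemma pv_out x (i : 'I_n) : (pv x < i)%N -> x i 0 = 0.
Proof. by move=> h; apply/eqP; apply: contraTT h => /pv_ge; rewrite -leqNgt. Qed.

Lemma is_pivE X j (i : 'I_n) : is_piv X j i = (col j X != 0) && (pv (col j X) == i).
Proof.
apply/idP/idP.
  case/andP=> nz /forallP h.
  have nzc : col j X != 0 by apply: contraNN nz => /eqP/matrixP/(_ i 0); rewrite !mxE => ->.
  rewrite nzc /=; apply/eqP; apply/eqP; rewrite eqn_leq pv_ge ?mxE // andbT.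
  have [k [hk ->]] := pv_ex nzc.
  rewrite leqNgt; apply/negP => lt; move: (h k); rewrite lt /= => /eqP hz.
  by move: hk; rewrite mxE hz eqxx.
case/andP=> nzc /eqP e.
have [k [hk ek]] := pv_ex nzc.
have -> : i = k by apply/val_inj; rewrite /= -e ek.
rewrite /is_piv; move: hk; rewrite mxE => -> /=; apply/forallP => i'; apply/implyP => lt.
by rewrite -ek in lt; move: (pv_out lt); rewrite mxE => ->.
Qed.

Lemma indep (I : finType) (w : I -> 'cV[F]_n) (c : I -> F) :
  (forall i1 i2, w i1 != 0 -> w i2 != 0 -> pv (w i1) = pv (w i2) -> i1 = i2) ->
  \sum_i c i *: w i = 0 -> forall i, w i != 0 -> c i = 0.
Proof.
move=> dist s0 i0 nz0; apply/eqP; apply/negPn/negP => c0.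
pose P := fun i => (w i != 0) && (c i != 0).
have P0 : P i0 by rewrite /P nz0 c0.
case: (@arg_maxnP _ i0 P (fun i => pv (w i)) P0) => i1 /andP[nz1 c1] mx.
have [p [hp ep]] := pv_ex nz1.
have : (\sum_i c i *: w i) p 0 = 0 by rewrite s0 mxE.
rewrite summxE (bigD1 i1) //= big1 ?addr0.
  by rewrite !mxE => /eqP; rewrite mulf_eq0 (negbTE c1) (negbTE hp).
move=> i ni; rewrite mxE.
have [ci0|ci] := eqVneq (c i) 0; first by rewrite ci0 mul0r.
have [wi0|wi] := eqVneq (w i) 0; first by rewrite wi0 mxE mulr0.
have le : (pv (w i) <= pv (w i1))%N by apply: mx; rewrite /P wi ci.
have ne : pv (w i) != pv (w i1) by apply/eqP => e; move/eqP: ni; apply; apply: dist.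
by rewrite pv_out ?mulr0 // -ep ltn_neqAle ne le.
Qed.

End Aux.
Section Tri.
Variable F : fieldType.
Variable n : nat.
Implicit Types (V : 'M[F]_n).

Lemma ut_diag V : upper_triangular V -> V \in unitmx -> forall i, V i i != 0.
Proof.
move=> ut; rewrite unitmxE unitfE -det_tr det_trig.
  by move/prodf_neq0 => h i; move: (h i isT); rewrite mxE.
by apply/is_trig_mxP => i j lt; rewrite mxE ut.
Qed.

Lemma ut_inv V : upper_triangular V -> V \in unitmx -> upper_triangular (invmx V).
Proof.
move=> ut uV; have d := ut_diag ut uV.
have VW := mulmxV uV; set W := invmx V in VW *.
suff H : forall k (i j : 'I_n), (n <= i + k)%N -> (j < i)%N -> W i j = 0.
  by move=> i j lt; apply: (H n) => //; rewrite leq_addl.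
elim=> [|k IH] i j.
  by rewrite addn0 => h; move: (ltn_ord i); rewrite ltnNge h.
move=> hk lt.
have : (V *m W) i j = 0 by rewrite VW mxE; case: eqP => // e; move: lt; rewrite e ltnn.
rewrite mxE (bigD1 i) //= big1 ?addr0.
  by move/eqP; rewrite mulf_eq0 (negbTE (d i)) /= => /eqP.
move=> l nl.
case: (ltngtP l i) => [li|il|e]; first by rewrite ut // mul0r.
  by rewrite (IH l j) ?mulr0 //; lia.
by move/eqP: nl; case; apply: val_inj.
Qed.

End Tri.

Section Gen.
Variable F : fieldType.

Lemma colM m n p j (A : 'M[F]_(m, n)) (B : 'M[F]_(n, p)) : col j (A *m B) = A *m col j B.
Proof. by rewrite !colE mulmxA. Qed.

Lemma mul_sum_col m n (A : 'M[F]_(m, n)) (u : 'cV[F]_n) : A *m u = \sum_j u j 0 *: col j A.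
Proof.
apply/matrixP => i k; rewrite ord1 mxE summxE; apply: eq_bigr => j _.
by rewrite !mxE mulrC.
Qed.

Lemma sum_delta n (I : finType) (j : I) (c : F) (w : I -> 'cV[F]_n) :
  \sum_i (if i == j then c else 0) *: w i = c *: w j.
Proof.
rewrite (bigD1 j) //= eqxx big1 ?addr0 // => i /negbTE ->; by rewrite scale0r.
Qed.

Lemma red_dist n (X : 'M[F]_n) : reduced X -> forall j1 j2, col j1 X != 0 -> col j2 X != 0 ->
  pv (col j1 X) = pv (col j2 X) -> j1 = j2.
Proof.
move=> red j1 j2 n1 n2 e; have [p [_ ep]] := pv_ex n1.
apply: (red j1 j2 p); rewrite is_pivE ?n1 ?n2 -?e ep eqxx //.
Qed.

Lemma entry_sub_col n (z : 'cV[F]_n) (c : F) (M : 'M[F]_n) i j :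
  (z - c *: col j M) i 0 = z i 0 - c * M i j.
Proof. by rewrite !mxE. Qed.

Lemma sum_cast (T : Type) (E : seq T) m (h : m = size E) (P : pred T) k (G : T -> 'cV[F]_k) :
  \sum_(a < m | P (tnth (in_tuple E) (cast_ord h a))) G (tnth (in_tuple E) (cast_ord h a))
  = \sum_(J <- E | P J) G J.
Proof. by subst m; rewrite [RHS]big_tnth; apply: eq_big => [a|a _]; rewrite cast_ord_id. Qed.

Lemma zmod_aux (M : zmodType) (a x y d : M) : a + x + y + d - (x + y) = d + a.
Proof. by rewrite -(addrA a x y) addrAC addrK addrC. Qed.

End Gen.

Section Filt.
Variables (F : fieldType) (N n : nat).
Implicit Types (c : 'I_n -> 'I_N.+1) (x : 'cV[F]_n).

Lemma inFiltP c (t : 'I_N.+1) x : reflect (forall i, (t < c i)%N -> x i 0 = 0) (inFilt c t x).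
Proof.
apply: (iffP forallP) => h i.
  by move=> lt; apply/eqP; move/implyP: (h i); apply.
by apply/implyP => lt; rewrite h.
Qed.

Lemma inFilt_up c (s t : 'I_N.+1) x : inFilt c s x -> (s <= t)%N -> inFilt c t x.
Proof. by move=> /inFiltP h st; apply/inFiltP => i lt; apply: h; apply: leq_ltn_trans lt. Qed.

Lemma inFilt_sum c t (I : finType) (P : pred I) (k : I -> F) (w : I -> 'cV[F]_n) :
  (forall i, P i -> inFilt c t (w i)) -> inFilt c t (\sum_(i | P i) k i *: w i).
Proof.
move=> h; apply/inFiltP => l lt; rewrite summxE big1 // => i Pi.
by rewrite mxE (inFiltP _ _ _ (h i Pi)) ?mulr0.
Qed.

Lemma inFilt_add c t x y : inFilt c t x -> inFilt c t y -> inFilt c t (x + y).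
Proof. by move=> /inFiltP hx /inFiltP hy; apply/inFiltP => i lt; rewrite mxE hx ?hy ?addr0. Qed.

Lemma inFilt0 c t : inFilt c t (0 : 'cV[F]_n).
Proof. by apply/inFiltP => i _; rewrite mxE. Qed.

Lemma col_ut_in c (M : 'M[F]_n) (cm : forall i j : 'I_n, (i <= j)%N -> (c i <= c j)%N) :
  upper_triangular M -> forall j (t : 'I_N.+1), (c j <= t)%N -> inFilt c t (col j M).
Proof.
move=> ut j t le; apply/inFiltP => i lt; rewrite mxE ut //.
rewrite ltnNge; apply/negP => ij; move: (leq_trans (cm _ _ ij) le).
by rewrite leqNgt lt.
Qed.

Lemma col_ut_notin c (M : 'M[F]_n) j (t : 'I_N.+1) : M j j != 0 -> (t < c j)%N -> ~~ inFilt c t (col j M).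
Proof. by move=> nz lt; apply/negP => /inFiltP /(_ j lt); rewrite mxE; apply/eqP. Qed.

Lemma pv_in c (cm : forall i j : 'I_n, (i <= j)%N -> (c i <= c j)%N) x (p : 'I_n) (t : 'I_N.+1) :
  pv x = p -> (c p <= t)%N -> inFilt c t x.
Proof.
move=> e le; apply/inFiltP => i lt; apply/eqP; apply: contraTT lt => nz.
rewrite -leqNgt; apply: leq_trans le; apply: cm; rewrite -e; exact: pv_ge.
Qed.

Lemma pv_col_ut (M : 'M[F]_n) i : upper_triangular M -> M i i != 0 -> col i M != 0 /\ pv (col i M) = i.
Proof.
move=> ut nz; have nzc : col i M != 0.
  by apply: contraNN nz => /eqP/matrixP/(_ i 0); rewrite !mxE => ->.
split => //; apply/eqP; rewrite eqn_leq pv_ge ?mxE // andbT.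
have [k [hk ->]] := pv_ex nzc; move: hk; rewrite mxE; apply: contraR; rewrite -ltnNge => lt.
by rewrite ut.
Qed.

End Filt.

Section Main.
Variables (F : fieldType) (N n : nat) (D D' Fm V Vphi : 'M[F]_n) (b b' : 'I_n -> 'I_N.+1).
Hypotheses (DD : D *m D = 0) (FD : Fm *m D = D' *m Fm) (uF : Fm \in unitmx)
  (uV : V \in unitmx) (utV : upper_triangular V)
  (uVp : Vphi \in unitmx) (utVp : upper_triangular Vphi)
  (redR : reduced (D *m V)) (redRp : reduced (D *m invmx Fm *m Vphi)).
Local Notation R := (D *m V).
Local Notation Rphi := (D *m invmx Fm *m Vphi).

Lemma D_Rphi (j : 'I_n) : D *m col j Rphi = 0.
Proof. by rewrite -colM !mulmxA DD !mul0mx; apply/matrixP => i k; rewrite !mxE. Qed.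

Lemma cyc_piv_zero (z : 'cV[F]_n) (K : 'I_n) : D *m z = 0 -> z K 0 != 0 ->
  (forall i : 'I_n, (K < i)%N -> z i 0 = 0) -> col K R = 0.
Proof.
move=> cz zK hi; set W := invmx V; set a := W *m z.
have Va : V *m a = z by rewrite /a mulmxA mulmxV // mul1mx.
have Ra : R *m a = 0 by rewrite -mulmxA Va.
rewrite mul_sum_col in Ra.
have ind := @indep F n _ (fun l => col l R) (fun l => a l 0) (red_dist redR) Ra.
apply/eqP; apply/negPn/negP => nz.
have aK := ind K nz.
have al : forall l : 'I_n, (K < l)%N -> a l 0 = 0.
  move=> l lt; rewrite /a mxE big1 // => m _.
  case: (ltnP m l) => h; first by rewrite (ut_inv utV uV) ?mul0r.
  by rewrite hi ?mulr0 //; apply: leq_trans h.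
move: zK; rewrite -Va mxE big1 ?eqxx // => l _.
case: (ltngtP l K) => h; first by rewrite utV ?mul0r.
  by rewrite al ?mulr0.
have -> : l = K by apply: val_inj.
by rewrite aK mulr0.
Qed.

Lemma span_cyc (Q : pred 'I_n) (Qdown : forall i j : 'I_n, (i <= j)%N -> Q j -> Q i) k (z : 'cV[F]_n) :
  D *m z = 0 -> (forall i : 'I_n, (k <= i)%N || ~~ Q i -> z i 0 = 0) ->
  exists alpha beta : 'I_n -> F,
    [/\ z = \sum_j alpha j *: col j Rphi + \sum_i beta i *: col i V,
      (forall j, alpha j != 0 -> col j Rphi != 0 /\ exists p : 'I_n, pv (col j Rphi) = p /\ Q p) &
      (forall i, beta i != 0 -> [/\ col i R = 0, i \notin pivs Rphi & Q i])].
Proof.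
elim: k z => [|k IH] z cz hz.
  exists (fun=> 0), (fun=> 0); split; [|by move=> j; rewrite eqxx|by move=> i; rewrite eqxx].
    have -> : z = 0 by apply/matrixP => i l; rewrite ord1 mxE; apply: hz.
    by rewrite !big1 ?addr0 // => i _; rewrite scale0r.
case: (ltnP k n) => kn; last first.
  apply: IH => // i /orP[ki|nq]; last by apply: hz; rewrite nq orbT.
  by move: (ltn_ord i); rewrite ltnNge (leq_trans kn ki).
pose K := Ordinal kn.
have [zK0|zK] := eqVneq (z K 0) 0.
  apply: IH => // i /orP[ki|nq]; last by apply: hz; rewrite nq orbT.
  move: ki; rewrite leq_eqVlt => /orP[/eqP e|lt]; last by apply: hz; rewrite lt.
  by have -> : i = K by apply: val_inj.
have QK : Q K by apply: contraNT zK => nq; apply/eqP; apply: hz; rewrite nq orbT.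
have hz' : forall i : 'I_n, (k <= i)%N || ~~ Q i -> (K < i)%N -> z i 0 = 0.
  by move=> i _ lt; apply: hz; rewrite lt.
have QK' : forall i : 'I_n, ~~ Q i -> (K < i)%N.
  by move=> i nq; rewrite ltnNge; apply: contra nq => le; apply: Qdown le QK.
case: (boolP (K \in pivs Rphi)) => [|nK].
  rewrite inE => /existsP [j pj].
  move: (pj) => /andP[RK /forallP Rz].
  set c := z K 0 / Rphi K j.
  have [al [be [ez ha hb]]] : exists alpha beta : 'I_n -> F,
    [/\ z - c *: col j Rphi = \sum_j alpha j *: col j Rphi + \sum_i beta i *: col i V,
      (forall j, alpha j != 0 -> col j Rphi != 0 /\ exists p : 'I_n, pv (col j Rphi) = p /\ Q p) &
      (forall i, beta i != 0 -> [/\ col i R = 0, i \notin pivs Rphi & Q i])].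
    apply: IH.
      by rewrite mulmxBr cz -scalemxAr D_Rphi scaler0 subrr.
    move=> i hi; rewrite entry_sub_col.
    have [e|ne] := eqVneq i K.
      by rewrite e /c divfK // subrr.
    have lt : (K < i)%N.
      case/orP: hi => [ki|/QK' //]; by rewrite ltn_neqAle ki andbT; apply: contra ne => /eqP e; apply/eqP/val_inj.
    by rewrite hz' ?(eqP (implyP (Rz i) lt)) ?mulr0 ?subrr // (hi).
  exists (fun i => al i + (if i == j then c else 0)), be; split.
  - under eq_bigr do rewrite scalerDl.
    by rewrite big_split /= sum_delta -addrA [c *: _ + _]addrC addrA -ez subrK.
  - move=> i; have [->|ne] := eqVneq i j.
      move=> _; move: pj; rewrite is_pivE => /andP[nz /eqP e]; split => //.
      by exists K.
    by rewrite addr0; apply: ha.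
  - exact: hb.
have RK : col K R = 0.
  apply: (cyc_piv_zero cz zK) => i lt; apply: hz; rewrite lt //.
set c := z K 0 / V K K.
have VKK := ut_diag utV uV K.
have [al [be [ez ha hb]]] : exists alpha beta : 'I_n -> F,
    [/\ z - c *: col K V = \sum_j alpha j *: col j Rphi + \sum_i beta i *: col i V,
      (forall j, alpha j != 0 -> col j Rphi != 0 /\ exists p : 'I_n, pv (col j Rphi) = p /\ Q p) &
      (forall i, beta i != 0 -> [/\ col i R = 0, i \notin pivs Rphi & Q i])].
  apply: IH.
    by rewrite mulmxBr cz -scalemxAr -colM RK scaler0 subrr.
  move=> i hi; rewrite !mxE.
  have [e|ne] := eqVneq i K.
    by rewrite e /c divfK // subrr.
  have lt : (K < i)%N.
    case/orP: hi => [ki|/QK' //]; by rewrite ltn_neqAle ki andbT; apply: contra ne => /eqP e; apply/eqP/val_inj.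
  by rewrite hz' ?utV ?mulr0 ?subrr // (hi).
exists al, (fun i => be i + (if i == K then c else 0)); split.
- under [X in _ = _ + X]eq_bigr do rewrite scalerDl.
  by rewrite big_split /= sum_delta addrA -ez subrK.
- exact: ha.
- move=> i; have [->|ne] := eqVneq i K; last by rewrite addr0; apply: hb.
  by move=> _; split.
Qed.


Hypotheses (bmono : forall i j : 'I_n, (i <= j)%N -> (b i <= b j)%N)
  (b'mono : forall i j : 'I_n, (i <= j)%N -> (b' i <= b' j)%N).

Lemma F6 (j : 'I_n) : Fm *m col j Rphi = D' *m col j Vphi.
Proof. by rewrite -!colM !mulmxA FD -(mulmxA D') mulmxV // mulmx1. Qed.

Lemma F7 : invmx Fm *m D' = D *m invmx Fm.
Proof.
apply: (canLR (mulKmx uF)); by rewrite mulmxA FD -mulmxA mulmxV // mulmx1.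
Qed.

Lemma main_bar :
  im_homology_has_barcode D D' Fm b b'
    ([seq supp b (col j Rphi) :\: supp b' (col j Vphi) |
        j <- enum 'I_n & (col j Rphi != 0)
                         && (supp b (col j Rphi) :\: supp b' (col j Vphi) != set0)]
     ++ [seq supp b (col i V) |
        i <- enum 'I_n & (col i R == 0) && (i \notin pivs Rphi)]).
Proof.
pose bar1 := fun j : 'I_n => supp b (col j Rphi) :\: supp b' (col j Vphi).
pose P1 := fun j : 'I_n => (col j Rphi != 0) && (bar1 j != set0).
pose bar2 := fun i : 'I_n => supp b (col i V).
pose P2 := fun i : 'I_n => (col i R == 0) && (i \notin pivs Rphi).
pose L1 := [seq j <- enum 'I_n | P1 j].
pose L2 := [seq j <- enum 'I_n | P2 j].
pose E := map inl L1 ++ map inr L2.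
pose barJ := fun J : 'I_n + 'I_n => match J with inl j => bar1 j | inr i => bar2 i end.
pose xJ := fun J : 'I_n + 'I_n => match J with inl j => col j Rphi | inr i => col i V end.
rewrite (_ : _ ++ _ = map barJ E); last by rewrite map_cat -!map_comp.
rewrite /im_homology_has_barcode /subquot_has_barcode.
have hsz := size_map barJ E.
pose e := fun a : 'I_(size (map barJ E)) => tnth (in_tuple E) (cast_ord hsz a).
have nthb : forall a : 'I_(size (map barJ E)), nth set0 (map barJ E) a = barJ (e a).
  move=> a; rewrite /e (tnth_nth (tnth (in_tuple E) (cast_ord hsz a))) /=.
  by rewrite (nth_map (tnth (in_tuple E) (cast_ord hsz a))) // -hsz.
have eE : forall a, e a \in E by move=> a; apply: mem_tnth.
have Euniq : uniq E.
  have i1 : injective (@inl 'I_n 'I_n) by move=> x y [].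
  have i2 : injective (@inr 'I_n 'I_n) by move=> x y [].
  have u1 : uniq L1 by rewrite filter_uniq // enum_uniq.
  have u2 : uniq L2 by rewrite filter_uniq // enum_uniq.
  rewrite cat_uniq !map_inj_uniq // u1 u2 /= andbT.
  by apply/hasPn => J /mapP [i _ ->]; apply/mapP => [[j _]].
have einj : injective e.
  move=> a1 a2 h; apply: (@cast_ord_inj _ _ hsz); apply/val_inj/eqP.
  have x0 := e a1.
  move: h; rewrite /e (tnth_nth x0) (tnth_nth x0 (in_tuple E) (cast_ord hsz a2)) => /eqP.
  by rewrite (nth_uniq x0 (ltn_ord (cast_ord hsz a1)) (ltn_ord (cast_ord hsz a2)) Euniq).
have memE1 : forall j, inl j \in E -> P1 j.
  by move=> j; rewrite mem_cat => /orP[/mapP [j' + [->]]|/mapP [? _ //]]; rewrite mem_filter => /andP[].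
have memE2 : forall i, inr i \in E -> P2 i.
  by move=> i; rewrite mem_cat => /orP[/mapP [? _ //]|/mapP [i' + [->]]]; rewrite mem_filter => /andP[].
have supp_up : forall (c : 'I_n -> 'I_N.+1) (x : 'cV[F]_n) (s t : 'I_N.+1), s \in supp c x -> (s <= t)%N -> t \in supp c x.
  by move=> c x s t h st; move: h; rewrite /supp !inE => h; apply: inFilt_up h st.
have B0 : forall t, boundaries D' b' t 0.
  by move=> t; exists 0; rewrite mulmx0; split => //; apply: inFilt0.
have xnz : forall J, J \in E -> xJ J != 0.
  case=> [j|i] hJ /=; first by case/andP: (memE1 _ hJ).
  exact: (pv_col_ut utV (ut_diag utV uV i)).1.
have pvV : forall i, pv (col i V) = i by move=> i; exact: (pv_col_ut utV (ut_diag utV uV i)).2.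
have pivRp : forall j (i : 'I_n), col j Rphi != 0 -> pv (col j Rphi) = i -> i \in pivs Rphi.
  by move=> j i nz e0; rewrite inE; apply/existsP; exists j; rewrite is_pivE nz e0 eqxx.
have pvE : forall J1 J2, J1 \in E -> J2 \in E -> pv (xJ J1) = pv (xJ J2) -> J1 = J2.
  case=> [j1|i1] [j2|i2] h1 h2 /= e0.
  - by congr inl; apply: (red_dist redRp) => //; [case/andP: (memE1 _ h1)|case/andP: (memE1 _ h2)].
  - case/andP: (memE2 _ h2) => _ /negP []; apply: (pivRp j1); first by case/andP: (memE1 _ h1).
    by rewrite e0 pvV.
  - case/andP: (memE2 _ h1) => _ /negP []; apply: (pivRp j2); first by case/andP: (memE1 _ h2).
    by rewrite -e0 pvV.
  - by move: e0; rewrite !pvV => /ord_inj ->.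
have Acyc : forall J (t : 'I_N.+1), J \in E -> t \in barJ J -> inFilt b t (xJ J) /\ D *m xJ J = 0.
  case=> [j|i] t hJ /=.
    by rewrite /bar1 in_setD => /andP[_]; rewrite /supp inE => h; split => //; apply: D_Rphi.
  rewrite /bar2 /supp inE => h; split => //; rewrite -colM.
  by case/andP: (memE2 _ hJ) => /eqP.
split.
  move=> I /mapP [J _ ->] s u t su ut; case: J => [j|i] /=.
    rewrite /bar1 !in_setD => /andP[ns hs] /andP[nt ht].
    rewrite (supp_up _ _ _ _ hs su) andbT; apply: contra nt => hu.
    exact: supp_up _ _ _ _ hu ut.
  by move=> hs _; apply: supp_up _ _ _ _ hs su.
exists (fun a t => Fm *m xJ (e a)); split.
- move=> a t; rewrite nthb => ht.
  have [h1 h2] := Acyc _ _ (eE a) ht.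
  exists (Fm *m xJ (e a)), 0; split; last by rewrite addr0.
    by exists (xJ (e a)).
  exact: B0.
- move=> t c [w [wt hw]] a0 ha0.
  pose act := fun a => t \in barJ (e a).
  have h1 : \sum_(a | act a) c a *: xJ (e a) = D *m invmx Fm *m w.
    rewrite -F7 -mulmxA -hw mulmx_sumr; apply: eq_big => [a|a _]; first by rewrite /act nthb.
    by rewrite -scalemxAr mulKmx.
  pose u := invmx Vphi *m w.
  have hRu : Rphi *m u = D *m invmx Fm *m w.
    by rewrite /u mulmxA -(mulmxA _ Vphi) mulmxV // mulmx1.
  have hu : forall j, ~~ (b' j <= t)%N -> u j 0 = 0.
    move=> j nj; rewrite /u mxE big1 // => l _.
    case: (ltnP l j) => lj; first by rewrite (ut_inv utVp uVp) ?mul0r.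
    rewrite (inFiltP _ _ _ wt) ?mulr0 //.
    by rewrite ltnNge; apply: contra nj => h; apply: leq_trans h; apply: b'mono.
  pose w' := fun K : 'I_(size (map barJ E)) + 'I_n => match K with
     | inl a => if act a then xJ (e a) else 0
     | inr j => if (b' j <= t)%N then col j Rphi else 0 end.
  pose c' := fun K : 'I_(size (map barJ E)) + 'I_n => match K with
     | inl a => c a | inr j => - u j 0 end.
  have sum0 : \sum_K c' K *: w' K = 0.
    rewrite big_sumType /=.
    transitivity (\sum_(a | act a) c a *: xJ (e a) - \sum_j u j 0 *: col j Rphi).
      congr (_ + _).
        rewrite [LHS](bigID act) /= [X in _ + X]big1 ?addr0; first by apply: eq_bigr => a ->.
        by move=> a /negbTE ->; rewrite scaler0.
      rewrite -sumrN; apply: eq_bigr => j _; case: ifP => h; first by rewrite scaleNr.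
      by rewrite scaler0 hu ?h // scale0r oppr0.
    by rewrite h1 -hRu mul_sum_col subrr.
  have actpv : forall a j, act a -> (b' j <= t)%N -> col j Rphi != 0 -> pv (xJ (e a)) != pv (col j Rphi).
    move=> a j ha hj nz; move: ha (eE a); rewrite /act; case: (e a) => [j0|i0] /= ha hE; apply/eqP => e0.
      have ej : j0 = j by apply: (red_dist redRp) => //; case/andP: (memE1 _ hE).
      move: ha; rewrite /bar1 in_setD ej /supp inE (col_ut_in b'mono utVp hj) //.
    case/andP: (memE2 _ hE) => _ /negP []; apply: (pivRp j) => //.
    by rewrite -e0 pvV.
  have dist : forall K1 K2, w' K1 != 0 -> w' K2 != 0 -> pv (w' K1) = pv (w' K2) -> K1 = K2.
    case=> [a1|j1] [a2|j2] /=.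
    - case: ifP => g1; last by rewrite eqxx.
      case: ifP => g2; last by rewrite eqxx.
      by move=> _ _ e0; congr inl; apply: einj; apply: pvE.
    - case: ifP => g1; last by rewrite eqxx.
      case: ifP => g2; last by rewrite eqxx.
      by move=> _ nz e0; move: (actpv _ _ g1 g2 nz); rewrite e0 eqxx.
    - case: ifP => g1; last by rewrite eqxx.
      case: ifP => g2; last by rewrite eqxx.
      by move=> nz _ e0; move: (actpv _ _ g2 g1 nz); rewrite e0 eqxx.
    - case: ifP => g1; last by rewrite eqxx.
      case: ifP => g2; last by rewrite eqxx.
      by move=> nz1 nz2 e0; congr inr; apply: (red_dist redRp).
  have ha0' : act a0 by rewrite /act -nthb.
  have := @indep F n _ w' c' dist sum0 (inl a0); rewrite /= ha0'; apply.
  exact: xnz.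
- move=> t u v [z [zt cz ->]] [w [wt ->]].
  have Qd : forall i j : 'I_n, (i <= j)%N -> (b j <= t)%N -> (b i <= t)%N.
    by move=> i j ij h; apply: leq_trans h; apply: bmono.
  have hz : forall i : 'I_n, (n <= i)%N || ~~ (b i <= t)%N -> z i 0 = 0.
    move=> i /orP[|]; first by rewrite leqNgt ltn_ord.
    by rewrite -ltnNge; apply: (inFiltP _ _ _ zt).
  have [al [be [ez ha hb]]] := @span_cyc (fun i => (b i <= t)%N) Qd n z cz hz.
  pose coefJ := fun J : 'I_n + 'I_n => match J with inl j => al j | inr i => be i end.
  exists (fun a => coefJ (e a)).
  pose w1 := \sum_(j | (b' j <= t)%N) al j *: col j Vphi.
  exists (w + w1); split.
    apply: inFilt_add wt _; rewrite /w1; apply: inFilt_sum => j hj; exact: (@col_ut_in F N n b' Vphi b'mono utVp j t hj).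
  have S : \sum_(a : 'I_(size (map barJ E)) | t \in nth set0 (map barJ E) a) coefJ (e a) *: (Fm *m xJ (e a))
        = Fm *m (\sum_(j | ~~ (b' j <= t)%N) al j *: col j Rphi + \sum_i be i *: col i V).
    transitivity (\sum_(J <- E | t \in barJ J) coefJ J *: (Fm *m xJ J)).
      by rewrite -(sum_cast hsz); apply: eq_big => [a|a _] //; rewrite nthb.
    rewrite big_cat /= !big_map /= /L1 /L2 !big_filter_cond.
    rewrite mulmxDr !mulmx_sumr [index_enum _]unlock.
    congr (_ + _); rewrite big_mkcond [RHS]big_mkcond; apply: eq_bigr => j _ /=.
      rewrite -scalemxAr; have [->|nz] := eqVneq (al j) 0.
        by rewrite !scale0r; case: ifP; case: ifP.
      have [nzc [p [ep bp]]] := ha j nz.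
      have inb : t \in supp b (col j Rphi) by rewrite /supp inE (pv_in bmono ep bp).
      case: (leqP (b' j) t) => h.
        have : t \notin bar1 j by rewrite /bar1 in_setD /supp inE (col_ut_in b'mono utVp h).
        by move/negbTE ->; rewrite !andbF.
      have tb : t \in bar1 j.
        by rewrite /bar1 in_setD inb andbT /supp inE (col_ut_notin (ut_diag utVp uVp j) h).
      have P1j : P1 j by rewrite /P1 nzc; apply/set0Pn; exists t.
      by rewrite P1j tb.
    rewrite -scalemxAr; have [->|nz] := eqVneq (be j) 0.
      by rewrite !scale0r; case: ifP.
    have [ri npiv bi] := hb j nz.
    have P2j : P2 j by rewrite /P2 ri eqxx npiv.
    have tb : t \in bar2 j by rewrite /bar2 /supp inE (col_ut_in bmono utV bi).
    by rewrite P2j tb.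
  rewrite S.
  have spl : \sum_j al j *: col j Rphi = \sum_(j | (b' j <= t)%N) al j *: col j Rphi
      + \sum_(j | ~~ (b' j <= t)%N) al j *: col j Rphi by rewrite (bigID (fun j => (b' j <= t)%N)).
  have FA : Fm *m (\sum_(j | (b' j <= t)%N) al j *: col j Rphi) = D' *m w1.
    by rewrite /w1 !mulmx_sumr; apply: eq_bigr => j _; rewrite -!scalemxAr F6.
  rewrite ez spl !mulmxDr FA.
  exact: zmod_aux.
- move=> a s t st; rewrite !nthb => hs.
  case: ifP => ht; first by rewrite subrr; apply: B0.
  move: hs ht (eE a); case: (e a) => [j|i] /= hs ht hE.
    move: hs; rewrite /bar1 in_setD => /andP[_ hs].
    have hts := supp_up _ _ _ _ hs st.
    move: ht; rewrite in_setD hts andbT => /negbFE hv.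
    exists (col j Vphi); split; [by move: hv; rewrite /supp inE | exact: F6].
  by move: ht; rewrite /bar2 (supp_up _ _ _ _ hs st).
Qed.

End Main.

Theorem theorem3p6 (F : fieldType) (N n : nat)
  (D D' Fm V Vphi : 'M[F]_n) (deg deg' : 'I_n -> int)
  (b b' : 'I_n -> 'I_N.+1) :
  filt_chain_complex D deg b ->
  filt_chain_complex D' deg' b' ->
  filt_chain_map D D' Fm deg deg' b b' ->
  Fm \in unitmx ->
  V \in unitmx -> upper_triangular V ->
  Vphi \in unitmx -> upper_triangular Vphi ->
  let Dphi := D *m invmx Fm in
  let R := D *m V in
  let Rphi := Dphi *m Vphi in
  reduced R -> reduced Rphi ->
  im_homology_has_barcode D D' Fm b b'
    ([seq supp b (col j Rphi) :\: supp b' (col j Vphi) |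
        j <- enum 'I_n & (col j Rphi != 0)
                         && (supp b (col j Rphi) :\: supp b' (col j Vphi) != set0)]
     ++ [seq supp b (col i V) |
        i <- enum 'I_n & (col i R == 0) && (i \notin pivs Rphi)]).
Proof.
move=> [DD _ _ bmono] [_ _ _ b'mono] [FD _ _] uF uV utV uVp utVp Dphi R Rphi redR redRp.
exact: (@main_bar F N n D D' Fm V Vphi b b' DD FD uF uV utV uVp utVp redR redRp bmono b'mono).
Qed.
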